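(* Let $Z$ be the twistor space of $\mathbb H^4$ and let $\mathbb Z_2^3$ act on $\mathbb H^4$ (ball model, coordinates $x_1,\dots,x_4$ centred at a point $p$) by the maps $(x_1,x_2,x_3,x_4)\mapsto(\pm x_1,\pm x_2,\pm x_3,\pm x_4)$ with an even number of sign changes; let $\mathbb Z_2^3$ act on $Z$ by the induced action. For $i\neq j$ let $\Pi_{ij}\subset\mathbb H^4$ be the totally geodesic coordinate $2$-plane in the $(x_i,x_j)$ directions; each $\Pi_{ij}$ has two twistor lifts to $Z$, giving twelve surfaces in $Z$. Then the points of $Z$ with non-trivial stabilizer are of two types: (1) there are exactly $6$ points with stabilizer $\mathbb Z_2^2$; they lie on the twistor fibre $t^{-1}(p)$ over $p$, arranged as the vertices of an octahedron, and each pair of opposite vertices forms an orbit of the $\mathbb Z_2^3$-action; (2) the remaining points with non-trivial stabilizer have stabilizer $\mathbb Z_2$; they form the union of the fibre $t^{-1}(p)$ and the twelve lifted surfaces, with the six points of (1) removed.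
   Context: The twistor space of $\mathbb H^4$ (with a fixed orientation) is $Z=\mathrm{SO}_0(4,1)/\mathrm U(2)$, the coadjoint orbit of $\mathrm{SO}_0(4,1)$ through an element $\begin{pmatrix}0&0\\0&J_0\end{pmatrix}$ with $J_0\in\mathfrak{so}(4)$, $J_0^2=-1$. The natural fibration $t\colon Z\to \mathrm{SO}_0(4,1)/\mathrm{SO}(4)=\mathbb H^4$ identifies the fibre $t^{-1}(q)\cong S^2$ with the set of linear complex structures on $T_q\mathbb H^4$ orthogonal for the hyperbolic metric and inducing the given orientation. An isometry of $\mathbb H^4$ preserving orientation acts on $Z$ naturally. The twistor lift of an oriented totally geodesic plane $\Pi\subset\mathbb H^4$ is the surface $\{J\in t^{-1}(q): q\in\Pi,\ T_q\Pi \text{ is a } J\text{-complex line, with orientation induced by } J \text{ agreeing with that of } \Pi\}$; the two orientations of $\Pi$ give two disjoint lifts. *)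

(* Defs.v *)
From HB Require Import structures.
From mathcomp Require Import all_boot all_order all_algebra.
From mathcomp Require Import reals.
Set Implicit Arguments. Unset Strict Implicit. Unset Printing Implicit Defensive.
Import Order.TTheory GRing.Theory Num.Theory.
Local Open Scope ring_scope.

Section Twistor.
Variable R : realType.

(** Ball model of H^4: points are column vectors of R^4 with |x| < 1,
    coordinates x_1..x_4 are indices 0..3, centre p = origin. *)
Definition sqnorm (x : 'cV[R]_4) : R := \sum_(i < 4) x i 0 ^+ 2.
Definition in_ball (x : 'cV[R]_4) : Prop := sqnorm x < 1.
Definition dot (u v : 'cV[R]_4) : R := \sum_(i < 4) u i 0 * v i 0.

Definition hyp_metric (q u v : 'cV[R]_4) : R :=
  4 / (1 - sqnorm q) ^+ 2 * dot u v.

Definition frame4 (a b c d : 'cV[R]_4) : 'M[R]_4 :=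
  \matrix_(r < 4, k < 4)
    (match val k with 0 => a | 1 => b | 2 => c | _ => d end) r 0.

(** Linear complex structure J on T_q H^4 = R^4, orthogonal for the
    hyperbolic metric at q, inducing the given (standard) orientation:
    every real frame (v, Jv, w, Jw) coming from a complex frame (v, w)
    is positively oriented (degenerate ones give det = 0). *)
Definition twistor_point (q : 'cV[R]_4) (J : 'M[R]_4) : Prop :=
  in_ball q /\
  J *m J = - 1%:M /\
  (forall u v : 'cV[R]_4, hyp_metric q (J *m u) (J *m v) = hyp_metric q u v) /\
  (forall v w : 'cV[R]_4, 0 <= \det (frame4 v (J *m v) w (J *m w))).

Definition in_fibre_p (q : 'cV[R]_4) (J : 'M[R]_4) : Prop := q = 0.

(** Group Z_2^3: sign patterns (true = sign change) with an even number
    of sign changes. *)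
Definition evenb (s : {ffun 'I_4 -> bool}) : bool :=
  ~~ odd #|[set i | s i]|.
Definition G : {set {ffun 'I_4 -> bool}} := [set s | evenb s].

Definition signmx (s : {ffun 'I_4 -> bool}) : 'M[R]_4 :=
  diag_mx (\row_i (if s i then -1 else 1)).

(** Induced action on Z: (q, J) |-> (D q, dD J dD^{-1}) with dD = D, D^{-1} = D. *)
Definition act (s : {ffun 'I_4 -> bool}) (z : 'cV[R]_4 * 'M[R]_4)
  : 'cV[R]_4 * 'M[R]_4 :=
  (signmx s *m z.1, signmx s *m z.2 *m signmx s).

Definition stab (q : 'cV[R]_4) (J : 'M[R]_4) : {set {ffun 'I_4 -> bool}} :=
  [set s in G | act s (q, J) == (q, J)].

Definition basis_vec (i : 'I_4) : 'cV[R]_4 := \col_k (k == i)%:R.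

(** Twistor lift of Pi_{ij} with the orientation given by the ordered
    basis (e_i, e_j): q in Pi_ij, T_q Pi_ij = span(e_i, e_j) is J-stable,
    and (e_i, J e_i) is positively oriented w.r.t. (e_i, e_j).
    The twelve surfaces are indexed by ordered pairs i <> j; (j,i) is
    the lift of the opposite orientation. *)
Definition in_lift (i j : 'I_4) (q : 'cV[R]_4) (J : 'M[R]_4) : Prop :=
  i != j /\
  (forall k : 'I_4, k != i -> k != j -> q k 0 = 0) /\
  (exists a b c d : R,
      J *m basis_vec i = a *: basis_vec i + b *: basis_vec j /\
      J *m basis_vec j = c *: basis_vec i + d *: basis_vec j /\
      0 < b).

(** Frobenius inner product on matrices (the fibre sits in so(4)). *)
Definition mxdot (A B : 'M[R]_4) : R := \tr (A^T *m B).

End Twistor.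

(* Main.v *)
Require Import Defs.
From HB Require Import structures.
From mathcomp Require Import all_boot all_order all_algebra.
From mathcomp Require Import reals ring lra zify.
Import Order.TTheory GRing.Theory Num.Theory.
Local Open Scope ring_scope.
Set Implicit Arguments. Unset Strict Implicit.

Notation o0 := (@Ordinal 4 0 isT).
Notation o1 := (@Ordinal 4 1 isT).
Notation o2 := (@Ordinal 4 2 isT).
Notation o3 := (@Ordinal 4 3 isT).
Section S.
Variable R : realType.


Lemma ord4P (P : 'I_4 -> Prop) : P o0 -> P o1 -> P o2 -> P o3 -> forall i, P i.
Proof.
move=> H0 H1 H2 H3 [[|[|[|[|n]]]] Hi] //.
- by rewrite (bool_irrelevance Hi isT).
- by rewrite (bool_irrelevance Hi isT).
- by rewrite (bool_irrelevance Hi isT).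
- by rewrite (bool_irrelevance Hi isT).
Qed.

Lemma sum4 (F : 'I_4 -> R) : \sum_(i < 4) F i = F o0 + F o1 + F o2 + F o3.
Proof.
rewrite !big_ord_recr big_ord0 /= add0r.
by congr (F _ + F _ + F _ + F _); apply: val_inj.
Qed.

Definition mk (b0 b1 b2 b3 : bool) : {ffun 'I_4 -> bool} :=
  [ffun i : 'I_4 => nth false [:: b0; b1; b2; b3] i].

Definition unmk (s : {ffun 'I_4 -> bool}) : bool * (bool * (bool * bool)) :=
  (s o0, (s o1, (s o2, s o3))).
Definition mkp (p : bool * (bool * (bool * bool))) := mk p.1 p.2.1 p.2.2.1 p.2.2.2.

Lemma mkpK : cancel mkp unmk.
Proof. by case=> a [b [c d]]; rewrite /unmk /mkp /mk !ffunE. Qed.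
Lemma unmkK : cancel unmk mkp.
Proof. by move=> s; apply/ffunP; apply: ord4P; rewrite /unmk /mkp /mk ffunE. Qed.

Lemma sum_ffun4 (F : {ffun 'I_4 -> bool} -> nat) :
  (\sum_s F s = \sum_(b0 : bool) \sum_(b1 : bool) \sum_(b2 : bool) \sum_(b3 : bool) F (mk b0 b1 b2 b3))%N.
Proof.
rewrite (reindex mkp); last by exists unmk => x _; [exact: mkpK | exact: unmkK].
rewrite -(pair_bigA _ (fun a p => F (mkp (a, p)))); apply: eq_bigr => b0 _.
rewrite -(pair_bigA _ (fun a p => F (mkp (b0, (a, p))))); apply: eq_bigr => b1 _.
rewrite -(pair_bigA _ (fun a p => F (mkp (b0, (b1, (a, p)))))); apply: eq_bigr => b2 _.
by apply: eq_bigr.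
Qed.

Lemma card_sum4 (A : {set {ffun 'I_4 -> bool}}) :
  #|A| = (\sum_(b0 : bool) \sum_(b1 : bool) \sum_(b2 : bool) \sum_(b3 : bool) (mk b0 b1 b2 b3 \in A))%N.
Proof.
rewrite -sum1_card big_mkcond /= sum_ffun4.
by do 4 (apply: eq_bigr => ? _); case: (_ \in A).
Qed.


Lemma sum4n (F : 'I_4 -> nat) : (\sum_(i < 4) F i = F o0 + F o1 + F o2 + F o3)%N.
Proof.
rewrite !big_ord_recr big_ord0 /= add0n.
by congr (F _ + F _ + F _ + F _)%N; apply: val_inj.
Qed.

Lemma forall4 (P : 'I_4 -> bool) : [forall k, P k] = [&& P o0, P o1, P o2 & P o3].
Proof.
apply/forallP/and4P => [H|[H0 H1 H2 H3]]; first by split; apply: H.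
by apply: ord4P.
Qed.

Lemma evenb_mk b0 b1 b2 b3 : evenb (mk b0 b1 b2 b3) = ~~ odd (b0 + b1 + b2 + b3)%N.
Proof.
rewrite /evenb -sum1dep_card big_mkcond /= sum4n /mk !ffunE /=.
by case: b0; case: b1; case: b2; case: b3.
Qed.

Lemma sgmx_l (s : {ffun 'I_4 -> bool}) (A : 'M[R]_4) i j :
  (signmx R s *m A) i j = (if s i then -1 else 1) * A i j.
Proof. by rewrite /signmx mul_diag_mx mxE mxE. Qed.
Lemma sgmx_q (s : {ffun 'I_4 -> bool}) (A : 'cV[R]_4) i j :
  (signmx R s *m A) i j = (if s i then -1 else 1) * A i j.
Proof. by rewrite /signmx mul_diag_mx mxE mxE. Qed.
Lemma sgmx_r (s : {ffun 'I_4 -> bool}) (A : 'M[R]_4) i j :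
  (A *m signmx R s) i j = A i j * (if s j then -1 else 1).
Proof. by rewrite /signmx mul_mx_diag mxE mxE. Qed.

Lemma sg1E (b : bool) (x : R) : ((if b then -1 else 1) * x == x) = (b ==> (x == 0)).
Proof.
case: b; rewrite /= ?mul1r ?eqxx //.
by apply/eqP/eqP => H; lra.
Qed.

Lemma sg2E (a b : bool) (x : R) :
  ((if a then -1 else 1) * x * (if b then -1 else 1) == x) = ((a != b) ==> (x == 0)).
Proof.
case: a; case: b; rewrite /= ?mul1r ?mulr1 ?eqxx //.
- by rewrite mulrN1 mulN1r opprK eqxx.
- by rewrite mulN1r; apply/eqP/eqP => H; lra.
- by rewrite mulrN1; apply/eqP/eqP => H; lra.
Qed.

Lemma detE n (A : 'M[R]_n.+1) : \det A =
  \sum_(j < n.+1) (-1) ^+ j * A ord0 j * \det (\matrix_(i < n, k < n) A (lift ord0 i) (lift j k)).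
Proof.
rewrite (expand_det_row _ ord0); apply: eq_bigr => j _.
rewrite /cofactor add0n mulrA [A _ _ * _]mulrC; congr (_ * \det _).
by apply/matrixP => a b; rewrite !mxE.
Qed.

Lemma det4 (f : nat -> nat -> R) : \det (\matrix_(i < 4, j < 4) f i j) =
   0 + f 0%N 0%N * f 1%N 1%N * f 2%N 2%N * f 3%N 3%N
    - f 0%N 0%N * f 1%N 1%N * f 2%N 3%N * f 3%N 2%N
    - f 0%N 0%N * f 1%N 2%N * f 2%N 1%N * f 3%N 3%N
    + f 0%N 0%N * f 1%N 2%N * f 2%N 3%N * f 3%N 1%N
    + f 0%N 0%N * f 1%N 3%N * f 2%N 1%N * f 3%N 2%N
    - f 0%N 0%N * f 1%N 3%N * f 2%N 2%N * f 3%N 1%N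
    - f 0%N 1%N * f 1%N 0%N * f 2%N 2%N * f 3%N 3%N
    + f 0%N 1%N * f 1%N 0%N * f 2%N 3%N * f 3%N 2%N
    + f 0%N 1%N * f 1%N 2%N * f 2%N 0%N * f 3%N 3%N
    - f 0%N 1%N * f 1%N 2%N * f 2%N 3%N * f 3%N 0%N
    - f 0%N 1%N * f 1%N 3%N * f 2%N 0%N * f 3%N 2%N
    + f 0%N 1%N * f 1%N 3%N * f 2%N 2%N * f 3%N 0%N
    + f 0%N 2%N * f 1%N 0%N * f 2%N 1%N * f 3%N 3%N
    - f 0%N 2%N * f 1%N 0%N * f 2%N 3%N * f 3%N 1%N
    - f 0%N 2%N * f 1%N 1%N * f 2%N 0%N * f 3%N 3%N
    + f 0%N 2%N * f 1%N 1%N * f 2%N 3%N * f 3%N 0%N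
    + f 0%N 2%N * f 1%N 3%N * f 2%N 0%N * f 3%N 1%N
    - f 0%N 2%N * f 1%N 3%N * f 2%N 1%N * f 3%N 0%N
    - f 0%N 3%N * f 1%N 0%N * f 2%N 1%N * f 3%N 2%N
    + f 0%N 3%N * f 1%N 0%N * f 2%N 2%N * f 3%N 1%N
    + f 0%N 3%N * f 1%N 1%N * f 2%N 0%N * f 3%N 2%N
    - f 0%N 3%N * f 1%N 1%N * f 2%N 2%N * f 3%N 0%N
    - f 0%N 3%N * f 1%N 2%N * f 2%N 0%N * f 3%N 1%N
    + f 0%N 3%N * f 1%N 2%N * f 2%N 1%N * f 3%N 0%N.
Proof.
do 4 rewrite !detE !big_ord_recr !big_ord0 /=. rewrite !det_mx00 !mxE /bump /=.
ring.
Qed.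
Section Stab.
Variables (q : 'cV[R]_4) (J : 'M[R]_4).

Definition qc (s : {ffun 'I_4 -> bool}) := [forall k, s k ==> (q k 0 == 0)].
Definition jc (s : {ffun 'I_4 -> bool}) := [forall a, [forall b, (s a != s b) ==> (J a b == 0)]].

Lemma stab_mem s : (s \in stab q J) = [&& s \in G, qc s & jc s].
Proof.
rewrite inE /act /= xpair_eqE; congr (_ && (_ && _)).
  apply/eqP/forallP => [H k | H].
    by rewrite -sg1E -{2}H sgmx_q.
  apply/matrixP => i j; rewrite ord1 sgmx_q; apply/eqP; rewrite sg1E; exact: H.
apply/eqP/forallP => [H a | H].
  apply/forallP => b; by rewrite -sg2E -{2}H sgmx_r sgmx_l.
apply/matrixP => a b; rewrite sgmx_r sgmx_l; apply/eqP; rewrite sg2E.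
exact: (forallP (H a) b).
Qed.

Lemma qc_mk b0 b1 b2 b3 : qc (mk b0 b1 b2 b3) =
  [&& b0 ==> (q o0 0 == 0), b1 ==> (q o1 0 == 0), b2 ==> (q o2 0 == 0) & b3 ==> (q o3 0 == 0)].
Proof. by rewrite /qc forall4 /mk !ffunE. Qed.

Lemma jc_neg b0 b1 b2 b3 : jc (mk (~~ b0) (~~ b1) (~~ b2) (~~ b3)) = jc (mk b0 b1 b2 b3).
Proof.
apply: eq_forallb => a; apply: eq_forallb => b.
rewrite /mk !ffunE.
have E : forall i : 'I_4, nth false [:: ~~ b0; ~~ b1; ~~ b2; ~~ b3] i = ~~ nth false [:: b0; b1; b2; b3] i by apply: ord4P.
by rewrite !E; case: (nth _ _ a); case: (nth _ _ b).
Qed.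

Lemma jc_const b : jc (mk b b b b).
Proof. apply/forallP => a; apply/forallP => c; rewrite /mk !ffunE.
have E : forall i : 'I_4, nth false [:: b; b; b; b] i = b by apply: ord4P.
by rewrite !E eqxx.
Qed.

Definition qz k := (q k 0 == 0).
Definition j1 := jc (mk true true false false).
Definition j2 := jc (mk true false true false).
Definition j3 := jc (mk true false false true).

Lemma card_stab : #|stab q J| =
  (1 + [&& qz o0, qz o1, qz o2 & qz o3]
   + [&& qz o0, qz o1 & j1] + [&& qz o2, qz o3 & j1]
   + [&& qz o0, qz o2 & j2] + [&& qz o1, qz o3 & j2]
   + [&& qz o0, qz o3 & j3] + [&& qz o1, qz o2 & j3])%N.
Proof.
rewrite card_sum4 !big_bool /= !stab_mem !inE !evenb_mk !qc_mk /= /j1 /j2 /j3.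
rewrite -(jc_neg true true false false) -(jc_neg true false true false) -(jc_neg true false false true) /=.
rewrite !jc_const /qz !andbT !andbA.
lia.
Qed.
End Stab.
End S.

Section Tw.
Variable R : realType.

Lemma mul_basis (A : 'M[R]_4) a k : (A *m basis_vec R a) k 0 = A k a.
Proof.
rewrite mxE (bigD1 a) //= !mxE eqxx mulr1 big1 ?addr0 // => i Hi.
by rewrite !mxE (negbTE Hi) mulr0.
Qed.

Variables (q : 'cV[R]_4) (J : 'M[R]_4).
Hypothesis H : twistor_point q J.

Lemma orthJ u v : dot (J *m u) (J *m v) = dot u v.
Proof.
case: H => Hb [_ [Ho _]].
have := Ho u v; rewrite /hyp_metric => E.
have hc : (4 / (1 - sqnorm q) ^+ 2 : R) != 0.
  rewrite mulf_neq0 // ?invr_eq0 ?expf_eq0 /=; first by apply/eqP => h; lra.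
  by move: Hb; rewrite /in_ball => Hb; apply/eqP => h; lra.
exact: (mulfI hc E).
Qed.

Lemma JtJ : J^T *m J = 1%:M.
Proof.
apply/matrixP => a b.
have := orthJ (basis_vec R a) (basis_vec R b); rewrite /dot.
under eq_bigr do rewrite !mul_basis.
move=> E; rewrite !mxE; under eq_bigr do rewrite !mxE.
rewrite E.
rewrite (bigD1 a) //= !mxE eqxx mul1r big1 ?addr0.
  by rewrite eq_sym.
by move=> i Hi; rewrite !mxE (negbTE Hi) mul0r.
Qed.

Lemma JJ : J *m J = - 1%:M.
Proof. by case: H => _ [-> _]. Qed.

Lemma Jskew : J^T = - J.
Proof.
have -> : J^T = J^T *m (- (J *m J)) by rewrite JJ opprK mulmx1.
by rewrite mulmxN mulmxA JtJ mul1mx.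
Qed.

Lemma skewE a b : J a b = - J b a.
Proof. by have := congr1 (fun M : 'M[R]_4 => M b a) Jskew; rewrite !mxE. Qed.

Lemma diag0 a : J a a = 0.
Proof. by have := skewE a a; lra. Qed.

Lemma JJdiag a : \sum_k J a k * J k a = -1.
Proof. by have := congr1 (fun M : 'M[R]_4 => M a a) JJ; rewrite !mxE eqxx. Qed.


Lemma jc_at s a b : jc J s -> s a != s b -> J a b = 0.
Proof. by move=> /forallP /(_ a) /forallP /(_ b) /implyP Hab /Hab /eqP. Qed.

Lemma row0_zero : J o0 o1 = 0 -> J o0 o2 = 0 -> J o0 o3 = 0 -> False.
Proof.
move=> h1 h2 h3; have := JJdiag o0; rewrite sum4 diag0 h1 h2 h3 !mul0r !addr0 => h.
by move: h; apply/eqP; rewrite eq_sym oppr_eq0 oner_eq0.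
Qed.

Ltac mkne_1 := by rewrite /mk !ffunE.

Lemma not_j12 : ~~ (j1 J && j2 J).
Proof.
apply/negP => /andP [h1 h2]; apply: row0_zero.
- by apply: (jc_at h2); mkne_1.
- by apply: (jc_at h1); mkne_1.
- by apply: (jc_at h1); mkne_1.
Qed.

Lemma not_j13 : ~~ (j1 J && j3 J).
Proof.
apply/negP => /andP [h1 h2]; apply: row0_zero.
- by apply: (jc_at h2); mkne_1.
- by apply: (jc_at h1); mkne_1.
- by apply: (jc_at h1); mkne_1.
Qed.

Lemma not_j23 : ~~ (j2 J && j3 J).
Proof.
apply/negP => /andP [h1 h2]; apply: row0_zero.
- by apply: (jc_at h1); mkne_1.
- by apply: (jc_at h2); mkne_1.
- by apply: (jc_at h1); mkne_1.
Qed.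

Ltac bcase_1 := rewrite card_stab; move: (not_j12) (not_j13) (not_j23);
  move: (j1 J) (j2 J) (j3 J) (qz q o0) (qz q o1) (qz q o2) (qz q o3);
  do 7 case.

Lemma card_part1 : (1 < #|stab q J|)%N ==> (#|stab q J| == 2%N) || (#|stab q J| == 4%N).
Proof. by bcase_1. Qed.

Lemma card_four : (#|stab q J| == 4%N) = [&& qz q o0, qz q o1, qz q o2, qz q o3 & [|| j1 J, j2 J | j3 J]].
Proof. by bcase_1. Qed.

Lemma card_two : (#|stab q J| == 2%N) ==> [|| [&& qz q o0, qz q o1, qz q o2 & qz q o3],
   [&& qz q o0, qz q o1 & j1 J], [&& qz q o2, qz q o3 & j1 J],
   [&& qz q o0, qz q o2 & j2 J], [&& qz q o1, qz q o3 & j2 J],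
   [&& qz q o0, qz q o3 & j3 J] | [&& qz q o1, qz q o2 & j3 J]].
Proof. by bcase_1. Qed.

Lemma card_ge2 : [&& qz q o0, qz q o1, qz q o2 & qz q o3] -> (1 < #|stab q J|)%N.
Proof. by bcase_1. Qed.
End Tw.

Section Tw3.
Variable R : realType.
Variables (q : 'cV[R]_4) (J : 'M[R]_4).
Hypothesis H : twistor_point q J.

Lemma q0_of : [&& qz q o0, qz q o1, qz q o2 & qz q o3] -> q = 0.
Proof.
move=> /and4P [h0 h1 h2 h3]; apply/matrixP => i z; rewrite ord1 mxE; apply/eqP.
by move: i; apply: ord4P.
Qed.

Lemma qz_of0 : q = 0 -> [&& qz q o0, qz q o1, qz q o2 & qz q o3].
Proof. by move=> ->; rewrite /qz !mxE eqxx. Qed.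

Lemma lift_of (i j : 'I_4) : i != j ->
  (forall r, r != i -> r != j -> q r 0 = 0 /\ J r i = 0 /\ J r j = 0) ->
  exists i' j', in_lift i' j' q J.
Proof.
move=> hij Hr.
have hcol : forall c, c = i \/ c = j ->
    J *m basis_vec R c = J i c *: basis_vec R i + J j c *: basis_vec R j.
  move=> c hc; apply/matrixP => r z; rewrite ord1 mul_basis /basis_vec !mxE.
  have [->|ri] := eqVneq r i; first by rewrite (negbTE hij) mulr1 mulr0 addr0.
  have [->|rj] := eqVneq r j; first by rewrite mulr1 mulr0 add0r.
  rewrite !mulr0 addr0.
  by case: hc => ->; [exact: (Hr r ri rj).2.1 | exact: (Hr r ri rj).2.2].
have hprod : J i j * J j i = -1.
  rewrite -(JJdiag H i) (bigD1 j) //= big1 ?addr0 // => k hk.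
  have [->|ki] := eqVneq k i; first by rewrite (diag0 H) mul0r.
  by rewrite (Hr k ki hk).2.1 mulr0.
have hs := skewE H i j.
have [hp|hn] := ltrP 0 (J j i).
  exists i, j; split => //; split.
    by move=> k ki kj; exact: (Hr k ki kj).1.
  exists (J i i), (J j i), (J i j), (J j j); split; first by apply: hcol; left.
  by split => //; apply: hcol; right.
exists j, i; split; first by rewrite eq_sym.
split; first by move=> k kj ki; exact: (Hr k ki kj).1.
exists (J j j), (J i j), (J j i), (J i i); split; first by rewrite addrC; apply: hcol; right.
split; first by rewrite addrC; apply: hcol; left.
have : J j i != 0 by apply/eqP => h; move: hprod; rewrite h mulr0 => /eqP; rewrite eq_sym oppr_eq0 oner_eq0.
move=> hne; rewrite hs; rewrite oppr_gt0; rewrite lt_neqAle hne hn //.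
Qed.

Ltac mkne_2 := by rewrite /mk !ffunE.

Lemma two_fwd : #|stab q J| = 2%N -> in_fibre_p q J \/ exists i j, in_lift i j q J.
Proof.
move=> hcard; have := card_two H; rewrite hcard eqxx /= /qz.
case/or4P => [/and4P [h0 h1 h2' h3]|||]; first by left; apply: q0_of; apply/and4P.
- move=> /and3P [/eqP h1 /eqP h2 hj]; right;
    apply: (@lift_of o2 o3) => //; apply: ord4P => //= _ _; do !split => //; apply: (jc_at hj); mkne_2.
- move=> /and3P [/eqP h1 /eqP h2 hj]; right;
    apply: (@lift_of o0 o1) => //; apply: ord4P => //= _ _; do !split => //; apply: (jc_at hj); mkne_2.
- case/or4P.
  + move=> /and3P [/eqP h1 /eqP h2 hj]; right;
    apply: (@lift_of o1 o3) => //; apply: ord4P => //= _ _; do !split => //; apply: (jc_at hj); mkne_2.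
  + move=> /and3P [/eqP h1 /eqP h2 hj]; right;
    apply: (@lift_of o0 o2) => //; apply: ord4P => //= _ _; do !split => //; apply: (jc_at hj); mkne_2.
  + move=> /and3P [/eqP h1 /eqP h2 hj]; right;
    apply: (@lift_of o1 o2) => //; apply: ord4P => //= _ _; do !split => //; apply: (jc_at hj); mkne_2.
  + move=> /and3P [/eqP h1 /eqP h2 hj]; right;
    apply: (@lift_of o0 o3) => //; apply: ord4P => //= _ _; do !split => //; apply: (jc_at hj); mkne_2.
Qed.

Lemma lift_stab i j : in_lift i j q J -> (1 < #|stab q J|)%N.
Proof.
case=> hij [hq [a [b [c [d [Hi [Hj _]]]]]]].
have Hcol : forall r, r != i -> r != j -> J r i = 0 /\ J r j = 0.
  move=> r ri rj; split.
  - have := congr1 (fun M : 'cV[R]_4 => M r 0) Hi.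
    by rewrite mul_basis /basis_vec !mxE (negbTE ri) (negbTE rj) !mulr0 addr0.
  - have := congr1 (fun M : 'cV[R]_4 => M r 0) Hj.
    by rewrite mul_basis /basis_vec !mxE (negbTE ri) (negbTE rj) !mulr0 addr0.
set s := [ffun k : 'I_4 => (k != i) && (k != j)].
have hS : [set k | s k] = ~: [set i; j].
  by apply/setP => k; rewrite !inE ffunE negb_or.
have hc2 : #|~: [set i; j]| = 2%N.
  have := cardsC [set i; j]; rewrite cards2 hij card_ord; lia.
apply/card_gt1P; exists (mk false false false false), s; split.
- by rewrite stab_mem inE evenb_mk qc_mk jc_const.
- rewrite stab_mem; apply/and3P; split.
  + by rewrite inE /evenb hS hc2.
  + apply/forallP => k; rewrite ffunE; apply/implyP => /andP [ki kj]; apply/eqP; exact: hq.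
  + apply/forallP => x; apply/forallP => y; rewrite !ffunE; apply/implyP => hxy; apply/eqP.
    case: (boolP ((x != i) && (x != j))) hxy => hx hxy.
    * have hy : ~~ ((y != i) && (y != j)) by move: hxy; case: (_ && _).
      move: hy; rewrite negb_and !negbK => /orP [/eqP ->|/eqP ->].
      - by move: hx => /andP [xi xj]; exact: (Hcol x xi xj).1.
      - by move: hx => /andP [xi xj]; exact: (Hcol x xi xj).2.
    * have /andP [yi yj] : (y != i) && (y != j) by move: hxy; case: (_ && _).
      rewrite (skewE H); move: hx; rewrite negb_and !negbK => /orP [/eqP ->|/eqP ->].
      - by rewrite (Hcol y yi yj).1 oppr0.
      - by rewrite (Hcol y yi yj).2 oppr0.
- apply/eqP => E; move: hc2; rewrite -hS.
  have -> : [set k | s k] = set0.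
    by apply/setP => k; rewrite !inE -E /mk ffunE; move: k; apply: ord4P.
  by rewrite cards0.
Qed.
End Tw3.

Section Conc.
Variable R : realType.

Definition oo (n : nat) : 'I_4 := match n with 0 => o0 | 1 => o1 | 2 => o2 | _ => o3 end.
Lemma oo_val (i : 'I_4) : oo i = i.
Proof. by move: i; apply: ord4P. Qed.

Definition frF (a b c d : 'cV[R]_4) (n m : nat) : R :=
  (match m with 0 => a | 1 => b | 2 => c | _ => d end) (oo n) 0.

Lemma frameE a b c d : frame4 a b c d = \matrix_(i < 4, j < 4) frF a b c d i j.
Proof. by apply/matrixP => i j; rewrite !mxE /frF oo_val. Qed.

Lemma in_ball0 : in_ball (0 : 'cV[R]_4).
Proof. by rewrite /in_ball /sqnorm big1 ?ltr01 // => i _; rewrite mxE expr0n. Qed.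

Definition m1 (a b : nat) : R := match a, b with 1,0 => 1 | 0,1 => -1 | 3,2 => 1 | 2,3 => -1 | _,_ => 0 end.
Definition m2 (a b : nat) : R := match a, b with 2,0 => 1 | 0,2 => -1 | 3,1 => -1 | 1,3 => 1 | _,_ => 0 end.
Definition m3 (a b : nat) : R := match a, b with 3,0 => 1 | 0,3 => -1 | 2,1 => 1 | 1,2 => -1 | _,_ => 0 end.
Definition J1 : 'M[R]_4 := \matrix_(i < 4, j < 4) m1 i j.
Definition J2 : 'M[R]_4 := \matrix_(i < 4, j < 4) m2 i j.
Definition J3 : 'M[R]_4 := \matrix_(i < 4, j < 4) m3 i j.

Ltac sq_tac_3 :=
  apply/matrixP; apply: ord4P; apply: ord4P;
  rewrite !mxE sum4 !mxE /= ?mulr1n ?mulr0n; ring.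

Ltac orth_tac_3 :=
  move=> u v; rewrite /hyp_metric; congr (_ * _);
  rewrite /dot !sum4 !mxE !sum4 !mxE /=; ring.

Ltac det_tac_3 X Y :=
  rewrite frameE det4 /frF /= !mxE !sum4 !mxE /=;
  apply: (le_trans (addr_ge0 (sqr_ge0 X) (sqr_ge0 Y)));
  rewrite le_eqVlt; apply/orP; left; apply/eqP; ring.

Lemma tw1 (sg : bool) : twistor_point 0 (if sg then - J1 else J1).
Proof.
split; first exact: in_ball0.
case: sg; (split; [sq_tac_3 | split; [orth_tac_3 | ]]) => v w.
- det_tac_3 (v o0 0 * w o2 0 - v o1 0 * w o3 0 - v o2 0 * w o0 0 + v o3 0 * w o1 0)
          (v o0 0 * w o3 0 + v o1 0 * w o2 0 - v o2 0 * w o1 0 - v o3 0 * w o0 0).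
- det_tac_3 (v o0 0 * w o2 0 - v o1 0 * w o3 0 - v o2 0 * w o0 0 + v o3 0 * w o1 0)
          (v o0 0 * w o3 0 + v o1 0 * w o2 0 - v o2 0 * w o1 0 - v o3 0 * w o0 0).
Qed.

Lemma tw2 (sg : bool) : twistor_point 0 (if sg then - J2 else J2).
Proof.
split; first exact: in_ball0.
case: sg; (split; [sq_tac_3 | split; [orth_tac_3 | ]]) => v w.
- det_tac_3 (v o0 0 * w o1 0 + v o2 0 * w o3 0 - v o1 0 * w o0 0 - v o3 0 * w o2 0) (v o2 0 * w o1 0 - v o0 0 * w o3 0 - v o1 0 * w o2 0 + v o3 0 * w o0 0).
- det_tac_3 (v o0 0 * w o1 0 + v o2 0 * w o3 0 - v o1 0 * w o0 0 - v o3 0 * w o2 0) (v o2 0 * w o1 0 - v o0 0 * w o3 0 - v o1 0 * w o2 0 + v o3 0 * w o0 0).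
Qed.

Lemma tw3 (sg : bool) : twistor_point 0 (if sg then - J3 else J3).
Proof.
split; first exact: in_ball0.
case: sg; (split; [sq_tac_3 | split; [orth_tac_3 | ]]) => v w.
- det_tac_3 (v o0 0 * w o1 0 - v o3 0 * w o2 0 - v o1 0 * w o0 0 + v o2 0 * w o3 0) (v o0 0 * w o2 0 + v o3 0 * w o1 0 - v o1 0 * w o3 0 - v o2 0 * w o0 0).
- det_tac_3 (v o0 0 * w o1 0 - v o3 0 * w o2 0 - v o1 0 * w o0 0 + v o2 0 * w o3 0) (v o0 0 * w o2 0 + v o3 0 * w o1 0 - v o1 0 * w o3 0 - v o2 0 * w o0 0).
Qed.
Ltac mkne_3 := by rewrite /mk !ffunE.

Lemma blk1 (q : 'cV[R]_4) (J : 'M[R]_4) : twistor_point q J -> j1 J -> J = J1 \/ J = - J1.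
Proof.
move=> H hj.
have z02 : J o0 o2 = 0 by apply: (jc_at hj); mkne_3.
have z03 : J o0 o3 = 0 by apply: (jc_at hj); mkne_3.
have z12 : J o1 o2 = 0 by apply: (jc_at hj); mkne_3.
have z13 : J o1 o3 = 0 by apply: (jc_at hj); mkne_3.
have z20 : J o2 o0 = 0 by apply: (jc_at hj); mkne_3.
have z30 : J o3 o0 = 0 by apply: (jc_at hj); mkne_3.
have z21 : J o2 o1 = 0 by apply: (jc_at hj); mkne_3.
have z31 : J o3 o1 = 0 by apply: (jc_at hj); mkne_3.
have d0 := diag0 H o0.
have d1 := diag0 H o1.
have d2 := diag0 H o2.
have d3 := diag0 H o3.
have s1 : J o0 o1 = - J o1 o0 := skewE H o0 o1.
have s2 : J o2 o3 = - J o3 o2 := skewE H o2 o3.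
have hx : J o1 o0 * J o1 o0 = 1.
  have := JJdiag H o0; rewrite sum4 ?z02 ?z03 ?z12 ?z13 ?z20 ?z30 ?z21 ?z31 ?d0 ?d1 ?d2 ?d3 s1; nra.
have hy : J o3 o2 * J o3 o2 = 1.
  have := JJdiag H o2; rewrite sum4 ?z02 ?z03 ?z12 ?z13 ?z20 ?z30 ?z21 ?z31 ?d0 ?d1 ?d2 ?d3 s2; nra.
have hd := H.2.2.2 (basis_vec R o0) (basis_vec R o2).
move: hd; rewrite frameE det4 /frF /= !mul_basis /basis_vec !mxE /= ?z02 ?z03 ?z12 ?z13 ?z20 ?z30 ?z21 ?z31 ?d0 ?d1 ?d2 ?d3 => hd.
have hd' : 0 <= ((J o1 o0 * J o3 o2)).
  by move: hd; rewrite !(mul0r, mulr0, mul1r, mulr1, mulN1r, mulrN1); lra.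
have p1 : ((J o1 o0 * J o3 o2)) = 1.
  have e : (((J o1 o0 * J o3 o2)) - 1) * (((J o1 o0 * J o3 o2)) + 1) = J o1 o0 * J o1 o0 * (J o3 o2 * J o3 o2) - 1 by ring.
  move: e; rewrite hx hy mulr1 subrr => /eqP; rewrite mulf_eq0 => /orP [/eqP h|/eqP h]; lra.
have hyx : J o3 o2 = J o1 o0.
  have e : (J o3 o2 - J o1 o0) * (J o3 o2 - J o1 o0) = J o3 o2 * J o3 o2 + J o1 o0 * J o1 o0 - 2 * ((J o1 o0 * J o3 o2)) by ring.
  move: e; rewrite hx hy p1 => /eqP; rewrite (_ : 1 + 1 - 2 * 1 = 0 :> R); last by ring.
  by rewrite mulf_eq0 => /orP [/eqP h|/eqP h]; lra.
have fin : forall c : R, J o1 o0 = c -> J = c *: J1.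
  move=> c hc; apply/matrixP; apply: ord4P; apply: ord4P;
  rewrite !mxE /= ?z02 ?z03 ?z12 ?z13 ?z20 ?z30 ?z21 ?z31 ?d0 ?d1 ?d2 ?d3 ?s1 ?s2 ?hyx ?hc; ring.
have [e|e] : J o1 o0 = 1 \/ J o1 o0 = -1.
  have : (J o1 o0 - 1) * (J o1 o0 + 1) = 0 by rewrite -[0](subrr 1) -{3}hx; ring.
  by move/eqP; rewrite mulf_eq0 => /orP [/eqP h|/eqP h]; [left|right]; lra.
- by left; rewrite (fin _ e) scale1r.
- by right; rewrite (fin _ e) scaleN1r.
Qed.

Lemma blk2 (q : 'cV[R]_4) (J : 'M[R]_4) : twistor_point q J -> j2 J -> J = J2 \/ J = - J2.
Proof.
move=> H hj.
have z01 : J o0 o1 = 0 by apply: (jc_at hj); mkne_3.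
have z03 : J o0 o3 = 0 by apply: (jc_at hj); mkne_3.
have z21 : J o2 o1 = 0 by apply: (jc_at hj); mkne_3.
have z23 : J o2 o3 = 0 by apply: (jc_at hj); mkne_3.
have z10 : J o1 o0 = 0 by apply: (jc_at hj); mkne_3.
have z30 : J o3 o0 = 0 by apply: (jc_at hj); mkne_3.
have z12 : J o1 o2 = 0 by apply: (jc_at hj); mkne_3.
have z32 : J o3 o2 = 0 by apply: (jc_at hj); mkne_3.
have d0 := diag0 H o0.
have d1 := diag0 H o1.
have d2 := diag0 H o2.
have d3 := diag0 H o3.
have s1 : J o0 o2 = - J o2 o0 := skewE H o0 o2.
have s2 : J o1 o3 = - J o3 o1 := skewE H o1 o3.
have hx : J o2 o0 * J o2 o0 = 1.
  have := JJdiag H o0; rewrite sum4 ?z01 ?z03 ?z21 ?z23 ?z10 ?z30 ?z12 ?z32 ?d0 ?d1 ?d2 ?d3 s1; nra.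
have hy : J o3 o1 * J o3 o1 = 1.
  have := JJdiag H o1; rewrite sum4 ?z01 ?z03 ?z21 ?z23 ?z10 ?z30 ?z12 ?z32 ?d0 ?d1 ?d2 ?d3 s2; nra.
have hd := H.2.2.2 (basis_vec R o0) (basis_vec R o1).
move: hd; rewrite frameE det4 /frF /= !mul_basis /basis_vec !mxE /= ?z01 ?z03 ?z21 ?z23 ?z10 ?z30 ?z12 ?z32 ?d0 ?d1 ?d2 ?d3 => hd.
have hd' : 0 <= (-(J o2 o0 * J o3 o1)).
  by move: hd; rewrite !(mul0r, mulr0, mul1r, mulr1, mulN1r, mulrN1); lra.
have p1 : (-(J o2 o0 * J o3 o1)) = 1.
  have e : ((-(J o2 o0 * J o3 o1)) - 1) * ((-(J o2 o0 * J o3 o1)) + 1) = J o2 o0 * J o2 o0 * (J o3 o1 * J o3 o1) - 1 by ring.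
  move: e; rewrite hx hy mulr1 subrr => /eqP; rewrite mulf_eq0 => /orP [/eqP h|/eqP h]; lra.
have hyx : J o3 o1 = -J o2 o0.
  have e : (J o3 o1 - -J o2 o0) * (J o3 o1 - -J o2 o0) = J o3 o1 * J o3 o1 + J o2 o0 * J o2 o0 - 2 * (-(J o2 o0 * J o3 o1)) by ring.
  move: e; rewrite hx hy p1 => /eqP; rewrite (_ : 1 + 1 - 2 * 1 = 0 :> R); last by ring.
  by rewrite mulf_eq0 => /orP [/eqP h|/eqP h]; lra.
have fin : forall c : R, J o2 o0 = c -> J = c *: J2.
  move=> c hc; apply/matrixP; apply: ord4P; apply: ord4P;
  rewrite !mxE /= ?z01 ?z03 ?z21 ?z23 ?z10 ?z30 ?z12 ?z32 ?d0 ?d1 ?d2 ?d3 ?s1 ?s2 ?hyx ?hc; ring.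
have [e|e] : J o2 o0 = 1 \/ J o2 o0 = -1.
  have : (J o2 o0 - 1) * (J o2 o0 + 1) = 0 by rewrite -[0](subrr 1) -{3}hx; ring.
  by move/eqP; rewrite mulf_eq0 => /orP [/eqP h|/eqP h]; [left|right]; lra.
- by left; rewrite (fin _ e) scale1r.
- by right; rewrite (fin _ e) scaleN1r.
Qed.

Lemma blk3 (q : 'cV[R]_4) (J : 'M[R]_4) : twistor_point q J -> j3 J -> J = J3 \/ J = - J3.
Proof.
move=> H hj.
have z01 : J o0 o1 = 0 by apply: (jc_at hj); mkne_3.
have z02 : J o0 o2 = 0 by apply: (jc_at hj); mkne_3.
have z31 : J o3 o1 = 0 by apply: (jc_at hj); mkne_3.
have z32 : J o3 o2 = 0 by apply: (jc_at hj); mkne_3.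
have z10 : J o1 o0 = 0 by apply: (jc_at hj); mkne_3.
have z20 : J o2 o0 = 0 by apply: (jc_at hj); mkne_3.
have z13 : J o1 o3 = 0 by apply: (jc_at hj); mkne_3.
have z23 : J o2 o3 = 0 by apply: (jc_at hj); mkne_3.
have d0 := diag0 H o0.
have d1 := diag0 H o1.
have d2 := diag0 H o2.
have d3 := diag0 H o3.
have s1 : J o0 o3 = - J o3 o0 := skewE H o0 o3.
have s2 : J o1 o2 = - J o2 o1 := skewE H o1 o2.
have hx : J o3 o0 * J o3 o0 = 1.
  have := JJdiag H o0; rewrite sum4 ?z01 ?z02 ?z31 ?z32 ?z10 ?z20 ?z13 ?z23 ?d0 ?d1 ?d2 ?d3 s1; nra.
have hy : J o2 o1 * J o2 o1 = 1.
  have := JJdiag H o1; rewrite sum4 ?z01 ?z02 ?z31 ?z32 ?z10 ?z20 ?z13 ?z23 ?d0 ?d1 ?d2 ?d3 s2; nra.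
have hd := H.2.2.2 (basis_vec R o0) (basis_vec R o1).
move: hd; rewrite frameE det4 /frF /= !mul_basis /basis_vec !mxE /= ?z01 ?z02 ?z31 ?z32 ?z10 ?z20 ?z13 ?z23 ?d0 ?d1 ?d2 ?d3 => hd.
have hd' : 0 <= ((J o3 o0 * J o2 o1)).
  by move: hd; rewrite !(mul0r, mulr0, mul1r, mulr1, mulN1r, mulrN1); lra.
have p1 : ((J o3 o0 * J o2 o1)) = 1.
  have e : (((J o3 o0 * J o2 o1)) - 1) * (((J o3 o0 * J o2 o1)) + 1) = J o3 o0 * J o3 o0 * (J o2 o1 * J o2 o1) - 1 by ring.
  move: e; rewrite hx hy mulr1 subrr => /eqP; rewrite mulf_eq0 => /orP [/eqP h|/eqP h]; lra.
have hyx : J o2 o1 = J o3 o0.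
  have e : (J o2 o1 - J o3 o0) * (J o2 o1 - J o3 o0) = J o2 o1 * J o2 o1 + J o3 o0 * J o3 o0 - 2 * ((J o3 o0 * J o2 o1)) by ring.
  move: e; rewrite hx hy p1 => /eqP; rewrite (_ : 1 + 1 - 2 * 1 = 0 :> R); last by ring.
  by rewrite mulf_eq0 => /orP [/eqP h|/eqP h]; lra.
have fin : forall c : R, J o3 o0 = c -> J = c *: J3.
  move=> c hc; apply/matrixP; apply: ord4P; apply: ord4P;
  rewrite !mxE /= ?z01 ?z02 ?z31 ?z32 ?z10 ?z20 ?z13 ?z23 ?d0 ?d1 ?d2 ?d3 ?s1 ?s2 ?hyx ?hc; ring.
have [e|e] : J o3 o0 = 1 \/ J o3 o0 = -1.
  have : (J o3 o0 - 1) * (J o3 o0 + 1) = 0 by rewrite -[0](subrr 1) -{3}hx; ring.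
  by move/eqP; rewrite mulf_eq0 => /orP [/eqP h|/eqP h]; [left|right]; lra.
- by left; rewrite (fin _ e) scale1r.
- by right; rewrite (fin _ e) scaleN1r.
Qed.
End Conc.

Section Fin.
Variable R : realType.

Ltac jc_tac_4 := apply/forallP; apply: ord4P; apply/forallP; apply: ord4P;
  rewrite /mk !ffunE /J1 /J2 /J3 !mxE /= ?oppr0 ?eqxx.

Lemma jJ1 : j1 (J1 R). Proof. by jc_tac_4. Qed.
Lemma jJ1n : j1 (- J1 R). Proof. by jc_tac_4. Qed.
Lemma jJ2 : j2 (J2 R). Proof. by jc_tac_4. Qed.
Lemma jJ2n : j2 (- J2 R). Proof. by jc_tac_4. Qed.
Lemma jJ3 : j3 (J3 R). Proof. by jc_tac_4. Qed.
Lemma jJ3n : j3 (- J3 R). Proof. by jc_tac_4. Qed.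

Ltac dot_tac_4 := rewrite /mxdot /mxtrace /J1 /J2 /J3 sum4 !mxE !sum4 !mxE /=; ring.
Lemma dot12 : mxdot (J1 R) (J2 R) = 0. Proof. dot_tac_4. Qed.
Lemma dot13 : mxdot (J1 R) (J3 R) = 0. Proof. dot_tac_4. Qed.
Lemma dot23 : mxdot (J2 R) (J3 R) = 0. Proof. dot_tac_4. Qed.

Definition code (A : 'M[R]_4) := A o1 o0 + 2 * A o2 o0 + 4 * A o3 o0.

Lemma uniqS : uniq [:: (0 : 'cV[R]_4, J1 R); (0, - J1 R); (0, J2 R); (0, - J2 R);
                  (0, J3 R); (0, - J3 R)].
Proof.
apply: (@map_uniq _ _ (fun z => code z.2)).
rewrite /= /code /J1 /J2 /J3 !mxE /= !inE !negb_or.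
repeat (apply/andP; split); try (apply/eqP => h; lra). all: by [].
Qed.

Ltac act_eq_4 := rewrite /act /=; congr (_, _); first by rewrite mulmx0.
Ltac act_mx_4 := apply/matrixP; apply: ord4P; apply: ord4P;
  rewrite sgmx_r sgmx_l /J1 /J2 /J3 !mxE /mk !ffunE /=; ring.

Lemma orbitK (K : 'M[R]_4) : K \in [:: J1 R; J2 R; J3 R] ->
  forall z : 'cV[R]_4 * 'M[R]_4,
    (exists2 s, s \in G & act s (0, K) = z) <-> (z = (0, K) \/ z = (0, - K)).
Proof.
rewrite !inE => /or3P [] /eqP -> z; split.
- case=> s; rewrite -[s]unmkK /mkp /unmk /=; move: (s o0) (s o1) (s o2) (s o3).
  by do 4 case; rewrite inE evenb_mk //= => _ <-;
    first [left; act_eq_4; act_mx_4 | right; act_eq_4; act_mx_4].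
- case=> ->; [exists (mk false false false false) | exists (mk true false true false)];
    rewrite ?inE ?evenb_mk //; act_eq_4; act_mx_4.
- case=> s; rewrite -[s]unmkK /mkp /unmk /=; move: (s o0) (s o1) (s o2) (s o3).
  by do 4 case; rewrite inE evenb_mk //= => _ <-;
    first [left; act_eq_4; act_mx_4 | right; act_eq_4; act_mx_4].
- case=> ->; [exists (mk false false false false) | exists (mk true true false false)];
    rewrite ?inE ?evenb_mk //; act_eq_4; act_mx_4.
- case=> s; rewrite -[s]unmkK /mkp /unmk /=; move: (s o0) (s o1) (s o2) (s o3).
  by do 4 case; rewrite inE evenb_mk //= => _ <-;
    first [left; act_eq_4; act_mx_4 | right; act_eq_4; act_mx_4].
- case=> ->; [exists (mk false false false false) | exists (mk true true false false)];
    rewrite ?inE ?evenb_mk //; act_eq_4; act_mx_4.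
Qed.
End Fin.

Unset Implicit Arguments.
Theorem lemma2p1 (R : realType) :
  (forall (q : 'cV[R]_4) (J : 'M[R]_4), twistor_point q J ->
     (1 < #|stab q J|)%N -> #|stab q J| = 2%N \/ #|stab q J| = 4%N) /\
  (exists J1 J2 J3 : 'M[R]_4,
     let S := [:: (0 : 'cV[R]_4, J1); (0, - J1); (0, J2); (0, - J2);
                  (0, J3); (0, - J3)] in
     uniq S /\
     (forall z, z \in S -> twistor_point z.1 z.2 /\ in_fibre_p z.1 z.2) /\
     (forall (q : 'cV[R]_4) (J : 'M[R]_4), twistor_point q J ->
        (#|stab q J| = 4%N <-> (q, J) \in S)) /\
     mxdot J1 J2 = 0 /\ mxdot J1 J3 = 0 /\ mxdot J2 J3 = 0 /\
     (forall K : 'M[R]_4, K \in [:: J1; J2; J3] ->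
        forall z : 'cV[R]_4 * 'M[R]_4,
          (exists2 s, s \in G & act s (0, K) = z) <->
          (z = (0, K) \/ z = (0, - K)))) /\
  (forall (q : 'cV[R]_4) (J : 'M[R]_4), twistor_point q J ->
     (#|stab q J| = 2%N <->
       ((in_fibre_p q J \/ exists i j : 'I_4, in_lift i j q J)
        /\ #|stab q J| <> 4%N))).
Proof.
split.
  move=> q J H h1; have := card_part1 H; rewrite h1 /=.
  by case/orP => /eqP ->; [left|right].
split.
  exists (J1 R), (J2 R), (J3 R) => S.
  split; first exact: uniqS.
  split.
    move=> z; rewrite /S !inE => /orP [/eqP ->|/orP [/eqP ->|/orP [/eqP ->|/orP [/eqP ->|/orP [/eqP ->|/eqP ->]]]]];
      split => //; [exact: (tw1 R false) | exact: (tw1 R true) | exact: (tw2 R false)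
                   | exact: (tw2 R true) | exact: (tw3 R false) | exact: (tw3 R true)].
  split.
    move=> q J H; split.
      move/eqP; rewrite (card_four H) => /and5P [h0 h1 h2 h3 hj].
      have q0 : q = 0 by apply: q0_of; apply/and4P.
      rewrite /S q0 !inE !xpair_eqE eqxx /=.
      case/or3P: hj => hj.
      - by case: (blk1 H hj) => ->; rewrite eqxx ?orbT.
      - by case: (blk2 H hj) => ->; rewrite eqxx ?orbT.
      - by case: (blk3 H hj) => ->; rewrite eqxx ?orbT.
    move=> hS; apply/eqP; rewrite (card_four H); move: hS.
    rewrite /S !inE !xpair_eqE.
    by do 5 (case/orP; first by case/andP => /eqP -> /eqP ->;
      rewrite /qz !mxE eqxx /= ?jJ1 ?jJ1n ?jJ2 ?jJ2n ?jJ3 ?jJ3n ?orbT);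
      case/andP => /eqP -> /eqP ->; rewrite /qz !mxE eqxx /= ?jJ3n ?orbT.
  split; first exact: dot12.
  split; first exact: dot13.
  split; first exact: dot23.
  exact: orbitK.
move=> q J H; split.
  by move=> h2; split; [exact: two_fwd | rewrite h2].
case=> hf hne.
have hgt : (1 < #|stab q J|)%N.
  case: hf => [hf|[i [j hl]]]; last exact: (lift_stab H hl).
  by apply: card_ge2 => //; rewrite /qz hf !mxE eqxx.
have := card_part1 H; rewrite hgt /= => /orP [/eqP //|/eqP h4].
by exfalso; apply: hne.
Qed.
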